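(* Let $q \geq 5$ be a prime power and let $\mathcal{X}$ be a plane curve of degree $q-1$ defined over $\mathbb{F}_q$ without $\mathbb{F}_q$-linear components with $\mathrm{N}_q(\mathcal{X}) = (q-1)^2$. Suppose $Q \in Z(\mathcal{X})$ is a point with $r = \psi_{q-1}(Q) \geq 2$, and let $l_1,\dots,l_r$ be the $\mathbb{F}_q$-lines through $Q$ containing exactly $q-1$ points of $\mathcal{X}(\mathbb{F}_q)$. Then the set $\bigcup_{i=1}^r \big((l_i(\mathbb{F}_q)\setminus\{Q\}) \cap Z(\mathcal{X})\big)$ is contained in a line.
   Context: $\mathcal{X}(\mathbb{F}_q)=\mathcal{X}\cap\mathbb{P}^2(\mathbb{F}_q)$, $\mathrm{N}_q(\mathcal{X})=\#\mathcal{X}(\mathbb{F}_q)$; ''without $\mathbb{F}_q$-linear components'' means no line defined over $\mathbb{F}_q$ is a component. $Z(\mathcal{X}) := \mathbb{P}^2(\mathbb{F}_q)\setminus\mathcal{X}(\mathbb{F}_q)$. For a point $P\in\mathbb{P}^2(\mathbb{F}_q)$ and $0\le i\le q+1$, $\psi_i(P)$ is the number of $\mathbb{F}_q$-lines $l$ through $P$ with $\#(l\cap\mathcal{X}(\mathbb{F}_q))=i$. *)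

(* Defs.v *)
From HB Require Import structures.
From mathcomp Require Import all_boot all_order all_algebra.
From mathcomp Require Import mpoly.
Set Implicit Arguments. Unset Strict Implicit. Unset Printing Implicit Defensive.
Import GRing.Theory.
Local Open Scope ring_scope.

(* Projective plane P^2(F): each point is represented by its unique
   normalized homogeneous coordinate vector (first nonzero coordinate = 1). *)
Definition normb (F : fieldType) (v : {ffun 'I_3 -> F}) : bool :=
  [exists i : 'I_3, (v i == 1) && [forall j : 'I_3, (j < i)%N ==> (v j == 0)]].

Definition pt (F : finFieldType) := {v : {ffun 'I_3 -> F} | normb v}.

(* F_q-lines of P^2, represented by normalized coefficient vectors (a0,a1,a2);
   the line is {a0 X0 + a1 X1 + a2 X2 = 0}. *)
Definition line (F : finFieldType) := pt F.

Definition on_line (F : finFieldType) (l : line F) (P : pt F) : bool :=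
  \sum_(i < 3) (val l) i * (val P) i == 0.

Definition linform (F : finFieldType) (l : line F) : {mpoly F[3]} :=
  \sum_(i < 3) (val l) i *: 'X_i.

Definition plane_curve (F : finFieldType) (d : nat) (C : {mpoly F[3]}) : Prop :=
  C != 0 /\ C \is d.-homog.

Definition no_Fq_linear_components (F : finFieldType) (C : {mpoly F[3]}) : Prop :=
  forall (l : line F) (G : {mpoly F[3]}), C <> linform l * G.

Definition Xpts (F : finFieldType) (C : {mpoly F[3]}) : {set pt F} :=
  [set P : pt F | C.@[fun i => (val P) i] == 0].

Definition Zpts (F : finFieldType) (C : {mpoly F[3]}) : {set pt F} :=
  ~: Xpts C.

Definition Nq (F : finFieldType) (C : {mpoly F[3]}) : nat := #|Xpts C|.

Definition lines_psi (F : finFieldType) (C : {mpoly F[3]}) (i : nat) (P : pt F)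
  : {set line F} :=
  [set l : line F | on_line l P && (#|[set R in Xpts C | on_line l R]| == i)].

Definition psi (F : finFieldType) (C : {mpoly F[3]}) (i : nat) (P : pt F) : nat :=
  #|lines_psi C i P|.

(* Main.v *)
Require Import Defs.
From HB Require Import structures.
From mathcomp Require Import all_boot all_order all_algebra all_fingroup all_solvable all_field.
From mathcomp Require Import mpoly.
From mathcomp Require Import ring.
Set Implicit Arguments. Unset Strict Implicit. Unset Printing Implicit Defensive.
Import GRing.Theory FinRing.Theory.
Local Open Scope ring_scope.

Section S.
Variable F : finFieldType.

Lemma card_natr0 : (#|F|%:R : F) = 0.
Proof. by rewrite -[#|F|]cardsT -zmodXgE expg_cardG ?inE. Qed.

Lemma powsum0 k : (k < #|F|.-1)%N -> \sum_(x : F) x ^+ k = 0.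
Proof.
case: k => [_|k Hk].
  by under eq_bigr do rewrite expr0; rewrite sumr_const card_natr0.
have [a a0 ak] : exists2 a : F, a != 0 & a ^+ k.+1 != 1.
  case: (pickP [pred a : F | (a != 0) && (a ^+ k.+1 != 1)]) => [a /andP[a0 ak]|H].
    by exists a.
  exfalso.
  pose p : {poly F} := 'X^(k.+1) - 1.
  have pn0 : p != 0.
    by rewrite -size_poly_eq0 /p size_polyDl ?size_polyXn // size_polyN size_poly1 ltnS.
  have := max_poly_roots pn0 (rs := enum [pred x : F | x != 0]).
  rewrite enum_uniq /p size_polyDl ?size_polyXn ?size_polyN ?size_poly1 //.
  rewrite -cardE cardC1.
  have -> : all (root ('X^(k.+1) - 1)) (enum [pred x : F | x != 0]).
    apply/allP => x; rewrite mem_enum inE => x0.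
    have := H x; rewrite /= x0 /= => /negbFE /eqP hx.
    by rewrite rootE !hornerE hx subrr.
  by move=> /(_ isT isT); rewrite ltnS leqNgt Hk.
have E : \sum_(x : F) x ^+ k.+1 = a ^+ k.+1 * \sum_(x : F) x ^+ k.+1.
  rewrite mulr_sumr (reindex_inj (mulfI a0)) /=.
  by apply: eq_bigr => x _; rewrite exprMn.
apply/eqP; move/eqP: E; rewrite -subr_eq0 -{1}[\sum_x _]mul1r -mulrBl mulf_eq0.
by rewrite subr_eq0 eq_sym (negbTE ak).
Qed.


Local Notation V := {ffun 'I_3 -> F}.
Definition i0 : 'I_3 := @Ordinal 3 0 isT.
Definition i1 : 'I_3 := @Ordinal 3 1 isT.
Definition i2 : 'I_3 := @Ordinal 3 2 isT.

Lemma ord3P (P : 'I_3 -> Prop) : P i0 -> P i1 -> P i2 -> forall i, P i.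
Proof.
move=> h0 h1 h2 [[|[|[|//]]] Hi].
- by rewrite (_ : Ordinal Hi = i0) //; apply: val_inj.
- by rewrite (_ : Ordinal Hi = i1) //; apply: val_inj.
- by rewrite (_ : Ordinal Hi = i2) //; apply: val_inj.
Qed.

Lemma sum3 (R : nmodType) (f : 'I_3 -> R) : \sum_(i < 3) f i = f i0 + f i1 + f i2.
Proof.
rewrite !big_ord_recl big_ord0 addr0 addrA.
by congr (f _ + f _ + f _); apply: val_inj.
Qed.

Definition dot (u w : V) := \sum_(i < 3) u i * w i.
Definition cross (u w : V) : V := [ffun i : 'I_3 =>
  match nat_of_ord i with
  | 0 => u i1 * w i2 - u i2 * w i1
  | 1 => u i2 * w i0 - u i0 * w i2
  | _ => u i0 * w i1 - u i1 * w i0 end].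
Definition scv (c : F) (u : V) : V := [ffun i => c * u i].

Lemma dotE u w : dot u w = u i0 * w i0 + u i1 * w i1 + u i2 * w i2.
Proof. by rewrite /dot sum3. Qed.

Lemma cross_cross x a b i :
  cross x (cross a b) i = dot x b * a i - dot x a * b i.
Proof.
rewrite !dotE; move: i; apply: ord3P; rewrite !ffunE /=; ring.
Qed.

Lemma dot_cross1 a b : dot a (cross a b) = 0.
Proof. rewrite dotE !ffunE /=; ring. Qed.
Lemma dot_cross2 a b : dot b (cross a b) = 0.
Proof. rewrite dotE !ffunE /=; ring. Qed.
Lemma dotC a b : dot a b = dot b a.
Proof. by rewrite !dotE; ring. Qed.

Lemma nz_comp (u : V) : u != 0 -> exists j, u j != 0.
Proof.
move=> un; apply/existsP; apply: contraR un => /existsPn H.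
by apply/eqP/ffunP => j; rewrite ffunE; apply/eqP/negbNE/H.
Qed.

Lemma cross0_comp u w : (forall i, cross u w i = 0) ->
  forall i j, u i * w j = u j * w i.
Proof.
move=> H.
have h0 := H i0; have h1 := H i1; have h2 := H i2.
rewrite !ffunE /= in h0 h1 h2.
move/eqP: h0; rewrite subr_eq0 => /eqP h0.
move/eqP: h1; rewrite subr_eq0 => /eqP h1.
move/eqP: h2; rewrite subr_eq0 => /eqP h2.
apply: ord3P; apply: ord3P => //; rewrite ?mulrC //.
Qed.

Lemma par0 u w j : (forall i, cross u w i = 0) -> w j != 0 ->
  forall i, u i = u j / w j * w i.
Proof.
move=> H wj i; have := cross0_comp H i j => E.
by rewrite mulrAC -E mulfK.
Qed.

Lemma normb_wit (u : V) : normb u ->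
  exists i : 'I_3, u i = 1 /\ forall j : 'I_3, (j < i)%N -> u j = 0.
Proof.
case/existsP => i /andP[/eqP ui /forallP H]; exists i; split => // j ji.
by have /implyP/(_ ji)/eqP := H j.
Qed.

Lemma normb_scale (u w : V) c : normb u -> normb w ->
  (forall i, u i = c * w i) -> u = w.
Proof.
move=> /normb_wit [i [ui Hu]] /normb_wit [i' [wi Hw]] E.
have ii : i = i'.
  case: (ltngtP i i') => [lt|lt|/val_inj //].
  - by move: (E i); rewrite ui Hw // mulr0 => /eqP; rewrite oner_eq0.
  - move: (E i'); rewrite Hu // wi mulr1 => c0.
    by move: (E i); rewrite ui -c0 mul0r => /eqP; rewrite oner_eq0.
subst i'; move: (E i); rewrite ui wi mulr1 => c1.
by apply/ffunP => j; rewrite E -c1 mul1r.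
Qed.

Lemma normb_nz (u : V) : normb u -> u != 0.
Proof.
move=> /normb_wit [i [ui _]]; apply/eqP => u0; move: ui; rewrite u0 ffunE.
by move/eqP; rewrite eq_sym oner_eq0.
Qed.

Lemma par (x a b : V) : dot x a = 0 -> dot x b = 0 -> cross a b != 0 ->
  exists s, forall i, x i = s * cross a b i.
Proof.
move=> xa xb /nz_comp [j cj].
exists (x j / cross a b j) => i; apply: par0 => // k.
by rewrite cross_cross xa xb !mul0r subrr.
Qed.

Lemma cross_nz (a b : V) : normb a -> normb b -> a != b -> cross a b != 0.
Proof.
move=> na nb ab; apply/eqP => c0; move/eqP: ab; apply.
have [j bj] := nz_comp (normb_nz nb).
apply: (normb_scale (c := a j / b j)) => //.
by apply: par0 => // i; rewrite c0 ffunE.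
Qed.

Definition normalize (u : V) : V :=
  if u i0 != 0 then scv (u i0)^-1 u
  else if u i1 != 0 then scv (u i1)^-1 u else scv (u i2)^-1 u.

Lemma normalizeP (u : V) : u != 0 ->
  normb (normalize u) /\ exists2 c, c != 0 & forall i, normalize u i = c * u i.
Proof.
move=> un; rewrite /normalize.
have E : forall c, forall i, scv c u i = c * u i by move=> c i; rewrite ffunE.
case: ifP => [a0|/negbFE/eqP a0].
  split; last by exists (u i0)^-1; rewrite ?invr_eq0.
  apply/existsP; exists i0; rewrite ffunE mulVf //= eqxx /=.
  by apply/forallP => -[j Hj].
case: ifP => [a1|/negbFE/eqP a1].
  split; last by exists (u i1)^-1; rewrite ?invr_eq0.
  apply/existsP; exists i1; rewrite ffunE mulVf //= eqxx /=.
  apply/forallP => j; apply/implyP; rewrite ffunE; case: j => [[|j] Hj] // _.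
  by rewrite (_ : Ordinal Hj = i0) ?a0 ?mulr0 //; apply: val_inj.
have a2 : u i2 != 0.
  apply: contraNneq un => a2; apply/eqP/ffunP; apply: ord3P; rewrite ffunE //.
split; last by exists (u i2)^-1; rewrite ?invr_eq0.
apply/existsP; exists i2; rewrite ffunE mulVf //= eqxx /=.
apply/forallP => j; apply/implyP; rewrite ffunE; case: j => [[|[|j]] Hj] // _.
  by rewrite (_ : Ordinal Hj = i0) ?a0 ?mulr0 //; apply: val_inj.
by rewrite (_ : Ordinal Hj = i1) ?a1 ?mulr0 //; apply: val_inj.
Qed.


Definition ev (p : {mpoly F[3]}) (v : V) : F := p.@[fun i => v i].
Definition lin (u : V) : {mpoly F[3]} := \sum_(i < 3) u i *: 'X_i.

Lemma ev_lin u v : ev (lin u) v = dot u v.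
Proof.
by rewrite /ev /lin sum3 !mevalD !mevalZ !mevalXU dotE.
Qed.

Lemma lin_homog u : lin u \is 1.-homog.
Proof.
rewrite /lin; apply: rpred_sum => i _; apply: dhomogZ.
by rewrite dhomogX; apply/mdeg1P; exists i.
Qed.

Lemma ev_scale p d c v : p \is d.-homog -> ev p (scv c v) = c ^+ d * ev p v.
Proof.
move=> /dhomogP H; rewrite /ev !mevalE mulr_sumr big_seq [RHS]big_seq.
apply: eq_bigr => m mp; rewrite mulrCA; congr (_ * _).
under eq_bigr do rewrite ffunE exprMn.
by rewrite big_split /= prodrXr -mdegE H.
Qed.

Lemma sum_aff p d : p \is d.-homog -> (d < 3 * #|F|.-1)%N ->
  \sum_(v : V) ev p v = 0.
Proof.
move=> /dhomogP H dlt; rewrite /ev.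
under eq_bigr do rewrite mevalE.
rewrite exchange_big big_seq /=; apply: big1 => m mp.
rewrite -mulr_sumr.
have -> : \sum_(v : V) \prod_i v i ^+ m i = \prod_(i < 3) \sum_(x : F) x ^+ m i.
  by rewrite bigA_distr_bigA.
have [i mi] : exists i : 'I_3, (m i < #|F|.-1)%N.
  apply/existsP; apply: contraLR dlt => /existsPn A.
  rewrite -leqNgt -(H m mp) /= mdegE sum3 /=.
  have a := A i0; have b := A i1; have c := A i2; rewrite -!leqNgt in a b c.
  by rewrite mulSn mul2n -addnn addnA leq_add // leq_add.
by rewrite (bigD1 i) //= powsum0 // mul0r mulr0.
Qed.


Definition e0 : V := [ffun i : 'I_3 => ((nat_of_ord i == 0%N)%:R : F)].
Lemma normb_e0 : normb e0.
Proof.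
apply/existsP; exists i0; rewrite ffunE /= eqxx /=.
by apply/forallP => -[j Hj].
Qed.
Definition pt0 : pt F := exist _ e0 normb_e0.

Definition npt (v : V) : pt F := insubd pt0 (normalize v).

Lemma val_npt v : v != 0 -> val (npt v) = normalize v.
Proof. by move=> vn; rewrite val_insubd (normalizeP vn).1. Qed.

Lemma unit_pow c : c != 0 -> c ^+ #|F|.-1 = 1 :> F.
Proof.
move=> c0; apply: (mulIf c0); rewrite mul1r -exprSr.
by rewrite prednK ?expf_card // (leq_trans _ (finNzRing_gt1 F)).
Qed.

Lemma ev0 p d : p \is d.-homog -> (0 < d)%N -> ev p 0 = 0.
Proof.
move=> H d0.
have -> : (0 : V) = scv 0 0 by apply/ffunP => i; rewrite !ffunE mul0r.
by rewrite (ev_scale _ _ H) expr0n eqn0Ngt d0 mul0r.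
Qed.

Lemma sum_proj p d : p \is d.-homog -> (0 < d)%N -> (d < 3 * #|F|.-1)%N ->
  (#|F|.-1 %| d)%N -> \sum_(P : pt F) ev p (val P) = 0.
Proof.
move=> H d0 dlt dvd.
have S0 := sum_aff H dlt.
rewrite (bigD1 (0 : V)) //= (ev0 H d0) add0r in S0.
rewrite (partition_big npt xpredT) //= in S0.
have inner : forall P : pt F,
    \sum_(v : V | (v != 0) && (npt v == P)) ev p v = - ev p (val P).
  move=> P.
  have Pn := normb_nz (valP P).
  have inj : {in [pred c : F | c != 0] &, injective (fun c => scv c (val P))}.
    move=> c c' _ _ E; have [j Pj] := nz_comp Pn.
    have := congr1 (fun f : V => f j) E; rewrite !ffunE => /mulIf; exact.
  have E : forall v : V, ((v != 0) && (npt v == P)) =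
            (v \in [set scv c (val P) | c in [pred c : F | c != 0]]).
    move=> v; apply/idP/imsetP.
    - case/andP => vn /eqP E.
      have [_ [c cn Hc]] := normalizeP vn.
      exists c^-1; first by rewrite inE invr_eq0.
      apply/ffunP => i; rewrite ffunE -E val_npt // Hc mulrA mulVf ?mul1r //.
    - case=> c; rewrite inE => cn ->.
      have vn : scv c (val P) != 0.
        apply: contra Pn => /eqP E; apply/eqP/ffunP => i.
        have := congr1 (fun f : V => f i) E; rewrite !ffunE => /eqP.
        by rewrite mulf_eq0 (negbTE cn) /= => /eqP ->.
      rewrite vn /=; apply/eqP/val_inj; rewrite val_npt //.
      have [nb [c' c'n Hc']] := normalizeP vn.
      apply: (normb_scale (c := c' * c)) => // [|i]; first exact: valP.
      by rewrite Hc' ffunE mulrA.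
  rewrite (eq_bigl _ _ E) (big_imset _ inj) /=.
  under eq_bigr => c cn.
    rewrite (ev_scale _ _ H).
    have -> : c ^+ d = 1.
      by case/dvdnP: dvd => k ->; rewrite mulnC exprM unit_pow ?expr1n.
    rewrite mul1r.
  over.
  rewrite sumr_const cardC1.
  have q1 : (#|F|.-1%:R : F) = -1.
    apply/eqP; rewrite -addr_eq0 -(natrD _ _ 1) addn1 prednK ?card_natr0 //.
    exact: (leq_trans _ (finNzRing_gt1 F)).
  by rewrite -mulr_natr q1 mulrN1.
rewrite (eq_bigr _ (fun P _ => inner P)) sumrN in S0.
by apply/eqP; rewrite -oppr_eq0 S0.
Qed.


Lemma on_lineE (l : line F) (P : pt F) : on_line l P = (dot (val l) (val P) == 0).
Proof. by []. Qed.

Lemma line_uniq (l l' : line F) (P P' : pt F) : P != P' ->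
  on_line l P -> on_line l P' -> on_line l' P -> on_line l' P' -> l = l'.
Proof.
rewrite !on_lineE => PP /eqP a /eqP b /eqP c /eqP d.
have cn : cross (val P) (val P') != 0.
  by apply: cross_nz; [exact: valP | exact: valP | apply: contra PP => /eqP/val_inj ->].
have [s Hs] := par a b cn.
have [s' Hs'] := par c d cn.
have [j lj] := nz_comp (normb_nz (valP l')).
have s'n : s' != 0.
  by apply: contra lj => /eqP s0; rewrite Hs' s0 mul0r.
apply: val_inj; apply: (normb_scale (c := s / s')); try exact: valP.
by move=> i; rewrite Hs Hs' mulrA divfK.
Qed.

Lemma card_line_gen (l : line F) (k x y : 'I_3) :
  val l k != 0 -> (forall u w, cross u w k = u x * w y - u y * w x) ->
  (#|[set P : pt F | on_line l P]| <= #|F|.+1)%N.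
Proof.
move=> lk crk.
pose f (P : pt F) : option F :=
  if val P x == 0 then None else Some (val P y / val P x).
have inj : {in [set P : pt F | on_line l P] &, injective f}.
  move=> P P'; rewrite !inE !on_lineE => /eqP a /eqP b E.
  apply/eqP; apply: contraT => PP.
  have cn : cross (val P) (val P') != 0.
    by apply: cross_nz; [exact: valP | exact: valP | apply: contra PP => /eqP/val_inj ->].
  have [s Hs] := par a b cn.
  have : cross (val P) (val P') k = 0.
    rewrite crk; move: E; rewrite /f.
    case: eqP => [px|/eqP px]; case: eqP => [px'|/eqP px'] //.
    - by move=> _; rewrite px px' !mul0r mulr0 subrr.
    - case => E; apply/eqP; rewrite subr_eq0; apply/eqP.
      have := congr1 (fun z => z * val P x * val P' x) E.
      by rewrite /= divfK // mulrAC divfK // => ->; rewrite mulrC.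
  by move=> c0; move: lk; rewrite Hs c0 mulr0 eqxx.
rewrite -(card_in_imset inj).
by rewrite (leq_trans (max_card _)) // card_option.
Qed.

Lemma card_line (l : line F) : (#|[set P : pt F | on_line l P]| <= #|F|.+1)%N.
Proof.
have [k lk] := nz_comp (normb_nz (valP l)).
move: k lk; apply: ord3P => lk.
- by apply: (card_line_gen (x := i1) (y := i2) lk) => u w; rewrite ffunE.
- by apply: (card_line_gen (x := i2) (y := i0) lk) => u w; rewrite ffunE.
- by apply: (card_line_gen (x := i0) (y := i1) lk) => u w; rewrite ffunE.
Qed.


Lemma ZptsE (C : {mpoly F[3]}) P : (P \in Zpts C) = (ev C (val P) != 0).
Proof. by rewrite /Zpts in_setC /Xpts inE. Qed.

Lemma R_le1 (C : {mpoly F[3]}) (Q : pt F) (l : line F) (P P' : pt F) :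
  l \in lines_psi C #|F|.-1 Q -> Q \in Zpts C ->
  on_line l P -> on_line l P' -> P != Q -> P' != Q ->
  P \in Zpts C -> P' \in Zpts C -> P = P'.
Proof.
rewrite inE => /andP[lQ /eqP cX] HQ lP lP' PQ P'Q HP HP'.
apply/eqP; apply: contraT => PP'.
set X := [set R in Xpts C | on_line l R].
have sub : Q |: (P |: (P' |: X)) \subset [set R | on_line l R].
  apply/subsetP => R; rewrite !in_setU1 !inE.
  by case/or4P => [/eqP->|/eqP->|/eqP->|/andP[]].
have := leq_trans (subset_leq_card sub) (card_line l).
have nX : forall R, R \in Zpts C -> (R \in X) = false.
  by move=> R; rewrite /Zpts in_setC inE => /negbTE h; rewrite /X !inE h.
rewrite !cardsU1 cX !in_setU1 !nX //.
rewrite ![Q == _]eq_sym (negbTE PQ) (negbTE P'Q) (negbTE PP') /= !add1n.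
by rewrite prednK // ?ltnn // (leq_trans _ (finNzRing_gt1 F)).
Qed.

Lemma off_line (la lc : line F) (Q P : pt F) :
  la != lc -> on_line la Q -> on_line lc Q -> on_line la P -> P != Q ->
  ~~ on_line lc P.
Proof.
move=> ne aQ cQ aP PQ; apply: contra ne => cP.
by apply/eqP; apply: (line_uniq PQ).
Qed.


Lemma ev_prod (T : {set F}) (f : F -> {mpoly F[3]}) v :
  ev (\prod_(t in T) f t) v = \prod_(t in T) ev (f t) v.
Proof.
rewrite /ev; apply: (big_morph (fun p => meval _ p)) => [p r|]; first exact: mevalM.
exact: meval1.
Qed.

Lemma homog_prod (T : {set F}) (f : F -> {mpoly F[3]}) :
  (forall t, f t \is 1.-homog) -> \prod_(t in T) f t \is #|T|.-homog.
Proof.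
move=> H; rewrite -big_enum cardE.
elim: (enum T) => [|t s IH]; first by rewrite big_nil dhomog1.
by rewrite big_cons /=; exact: (dhomogM (H t) IH).
Qed.

Lemma dot_lc (a b : F) (x y v : V) :
  dot [ffun i => a * x i - b * y i] v = a * dot x v - b * dot y v.
Proof. rewrite !dotE !ffunE; ring. Qed.

Lemma dot_sc (x y v : V) s : (forall i, x i = s * y i) -> dot x v = s * dot y v.
Proof. move=> H; rewrite !dotE !H; ring. Qed.

Lemma keyA (C : {mpoly F[3]}) (Q : pt F) (la lb lc : line F) (Pa Pb Pc : pt F) :
  (3 <= #|F|)%N -> C \is (#|F|.-1).-homog -> Q \in Zpts C ->
  la \in lines_psi C #|F|.-1 Q -> lb \in lines_psi C #|F|.-1 Q ->
  lc \in lines_psi C #|F|.-1 Q ->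
  la != lb -> la != lc -> lb != lc ->
  on_line la Pa -> Pa != Q -> Pa \in Zpts C ->
  on_line lb Pb -> Pb != Q -> Pb \in Zpts C ->
  on_line lc Pc -> Pc != Q -> Pc \in Zpts C ->
  dot (cross (val Pa) (val Pb)) (val Pc) = 0.
Proof.
move=> q3 HC HQ Ha Hb Hc ab ac bc aPa PaQ ZPa bPb PbQ ZPb cPc PcQ ZPc.
have aQ : on_line la Q by move: Ha; rewrite inE => /andP[].
have bQ : on_line lb Q by move: Hb; rewrite inE => /andP[].
have cQ : on_line lc Q by move: Hc; rewrite inE => /andP[].
set lam := lin (val lc); set mu := lin (val la).
have evlam v : ev lam v = dot (val lc) v by rewrite ev_lin.
have evmu v : ev mu v = dot (val la) v by rewrite ev_lin.
have ab' : lb != la by rewrite eq_sym.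
have ac' : lc != la by rewrite eq_sym.
have lamQ : dot (val lc) (val Q) = 0 by apply/eqP.
have muQ : dot (val la) (val Q) = 0 by apply/eqP.
have lamPb : dot (val lc) (val Pb) != 0 by have := off_line bc bQ cQ bPb PbQ.
have muPb : dot (val la) (val Pb) != 0.
  by have := off_line (ab' : lb != la) bQ aQ bPb PbQ.
have muPc : dot (val la) (val Pc) != 0.
  by have := off_line (ac' : lc != la) cQ aQ cPc PcQ.
set tb := dot (val la) (val Pb) / dot (val lc) (val Pb).
have tb0 : tb != 0 by rewrite mulf_neq0 // invr_eq0.
set T := [set t : F | (t != 0) && (t != tb)].
have cT : #|T| = #|F|.-2.
  have -> : T = ~: [set 0; tb].
    by apply/setP => t; rewrite !inE negb_or.
  by rewrite -subn2 -(cardsC [set 0; tb]) cards2 eq_sym tb0 addKn.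
set m := cross (val Pa) (val Pb).
have mPa : dot m (val Pa) = 0 by rewrite dotC dot_cross1.
have mPb : dot m (val Pb) = 0 by rewrite dotC dot_cross2.
set Pi := \prod_(t in T) (mu - t *: lam).
set G := C * (lin m * Pi).
have evG v : ev G v = ev C v * (dot m v * \prod_(t in T) (dot (val la) v - t * dot (val lc) v)).
  rewrite /ev /G !mevalM -/(ev _ _) -/(ev _ _) ev_lin -/(ev _ _) ev_prod.
  by congr (_ * (_ * _)); apply: eq_bigr => t _; rewrite /ev mevalB mevalZ -!/(ev _ _) evmu evlam.
have q1 : (2 <= #|F|.-1)%N by rewrite -ltnS prednK // (leq_trans _ q3).
have HG : G \is (#|F|.-1 * 2).-homog.
  rewrite /G muln2 -addnn; apply: dhomogM => //.
  have -> : #|F|.-1 = (1 + #|T|)%N.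
    by rewrite cT add1n prednK // -ltnS prednK // (leq_trans _ q3).
  apply: dhomogM; first exact: lin_homog.
  apply: homog_prod => t; apply: rpredB; first exact: lin_homog.
  by apply: dhomogZ; exact: lin_homog.
have n0 : (0 < #|F|.-1)%N by apply: leq_trans q1.
have d0 : (0 < #|F|.-1 * 2)%N by rewrite muln_gt0 n0.
have dlt : (#|F|.-1 * 2 < 3 * #|F|.-1)%N by rewrite mulnC ltn_mul2r n0.
have S := sum_proj HG d0 dlt (dvdn_mulr _ (dvdnn _)).
rewrite (bigD1 Pc) //= big1 ?addr0 in S; last first.
  move=> P PPc; rewrite evG.
  case ZP : (P \in Zpts C); last first.
    by move: ZP; rewrite ZptsE => /negbFE/eqP ->; rewrite mul0r.
  apply/eqP; rewrite mulf_eq0 [X in _ || X]mulf_eq0; apply/orP; right.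
  have [l0|l0] := eqVneq (dot (val lc) (val P)) 0.
    have [PQ|PQ] := eqVneq P Q.
      have [t tT] : exists t, t \in T.
        by apply/card_gt0P; rewrite cT -subn2 subn_gt0.
      by rewrite (bigD1 t) //= PQ muQ lamQ mulr0 subrr mul0r eqxx orbT.
    have l0' : on_line lc P by rewrite on_lineE l0.
    have := R_le1 Hc HQ l0' cPc PQ PcQ ZP ZPc.
    by move/eqP; rewrite (negbTE PPc).
  set t := dot (val la) (val P) / dot (val lc) (val P).
  have [tT|tT] := boolP (t \in T).
    by rewrite (bigD1 t) //= /t divfK // subrr mul0r eqxx orbT.
  move: tT; rewrite inE negb_and !negbK => /orP[/eqP t0|/eqP ttb].
    have mu0 : on_line la P.
      rewrite on_lineE; move: t0; rewrite /t => /eqP.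
      by rewrite mulf_eq0 invr_eq0 (negbTE l0) orbF.
    have PQ : P != Q by apply: contra l0 => /eqP ->; rewrite lamQ.
    by rewrite (R_le1 Ha HQ mu0 aPa PQ PaQ ZP ZPa) mPa eqxx.
  have PQ : P != Q by apply: contra l0 => /eqP ->; rewrite lamQ.
  pose rho : V := [ffun i => dot (val la) (val Pb) * val lc i - dot (val lc) (val Pb) * val la i].
  have rhoE v : dot rho v = dot (val la) (val Pb) * dot (val lc) v - dot (val lc) (val Pb) * dot (val la) v.
    exact: dot_lc.
  have rhoP : dot rho (val P) = 0.
    rewrite rhoE; move: ttb; rewrite /t /tb => E.
    apply/eqP; rewrite subr_eq0; apply/eqP.
    have := congr1 (fun z => z * dot (val lc) (val P) * dot (val lc) (val Pb)) E.
    rewrite /= divfK // [RHS]mulrAC divfK // => <-; by rewrite mulrC.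
  have rn : rho != 0.
    apply/eqP => r0; move/eqP: ac; apply; apply: val_inj; apply/esym.
    apply: (normb_scale (c := dot (val lc) (val Pb) / dot (val la) (val Pb))); try exact: valP.
    move=> i; have := congr1 (fun f : V => f i) r0; rewrite !ffunE => /eqP.
    rewrite subr_eq0 => /eqP E; apply: (mulfI muPb).
    by rewrite E mulrCA mulrA divfK.
  have cn : cross (val Q) (val Pb) != 0.
    by apply: cross_nz; [exact: valP | exact: valP | apply: contra PbQ => /eqP/val_inj ->; rewrite eqxx].
  have rQ : dot rho (val Q) = 0 by rewrite rhoE lamQ muQ !mulr0 subrr.
  have rPb : dot rho (val Pb) = 0 by rewrite rhoE mulrC subrr.
  have [s Hs] := par rQ rPb cn.
  have lbQ' : dot (val lb) (val Q) = 0 by apply/eqP.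
  have lbPb : dot (val lb) (val Pb) = 0 by apply/eqP.
  have [s' Hs'] := par lbQ' lbPb cn.
  have s0 : s != 0.
    by apply: contra rn => /eqP s0; apply/eqP/ffunP => i; rewrite Hs s0 mul0r ffunE.
  have cP : dot (cross (val Q) (val Pb)) (val P) = 0.
    by move: rhoP; rewrite (dot_sc _ Hs) => /eqP; rewrite mulf_eq0 (negbTE s0) => /eqP.
  have lbP : on_line lb P by rewrite on_lineE (dot_sc _ Hs') cP mulr0.
  by rewrite (R_le1 Hb HQ lbP bPb PQ PbQ ZP ZPb) mPb eqxx.
have cPc0 : dot (val lc) (val Pc) = 0 by apply/eqP.
move: S; rewrite evG => /eqP; rewrite mulf_eq0.
move: ZPc; rewrite ZptsE => /negbTE -> /=; rewrite mulf_eq0 => /orP[/eqP //|].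
rewrite (eq_bigr (fun _ => dot (val la) (val Pc))); last first.
  by move=> t _; rewrite cPc0 mulr0 subr0.
by rewrite prodr_const expf_eq0 (negbTE muPc) andbF.
Qed.

End S.

Unset Implicit Arguments.
Set Strict Implicit.

Theorem corollary3p9 (F : finFieldType) (C : {mpoly F[3]}) (Q : pt F) :
  (5 <= #|F|)%N ->
  plane_curve (#|F|.-1) C ->
  no_Fq_linear_components C ->
  Nq C = (#|F|.-1 ^ 2)%N ->
  Q \in Zpts C ->
  (2 <= psi C (#|F|.-1) Q)%N ->
  exists m : line F,
    forall (l : line F) (P : pt F),
      l \in lines_psi C (#|F|.-1) Q ->
      on_line l P -> P != Q -> P \in Zpts C -> on_line m P.
Proof.
move=> q5 [Cn HC] _ _ HQ _.
have q3 : (3 <= #|F|)%N by apply: leq_trans q5.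
pose inR (P : pt F) := [exists l, (l \in lines_psi C #|F|.-1 Q) && on_line l P]
   && (P != Q) && (P \in Zpts C).
have inRI : forall l P, l \in lines_psi C #|F|.-1 Q -> on_line l P -> P != Q ->
    P \in Zpts C -> inR P.
  move=> l P Hl lP PQ ZP; rewrite /inR PQ ZP !andbT.
  by apply/existsP; exists l; rewrite Hl lP.
case: (pickP inR) => [Pa Ra | none]; last first.
  exists (pt0 F) => l P Hl lP PQ ZP; exfalso.
  by have := none P; rewrite (inRI _ _ Hl lP PQ ZP).
case/andP: Ra => /andP[/existsP[la /andP[Ha aPa]] PaQ] ZPa.
case: (pickP [pred P | inR P && (P != Pa)]) => [Pb /andP[Rb PbPa] | none2]; last first.
  exists la => l P Hl lP PQ ZP.
  have := none2 P; rewrite /= (inRI _ _ Hl lP PQ ZP) /= => /negbFE/eqP ->.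
  exact: aPa.
case/andP: Rb => /andP[/existsP[lb /andP[Hb bPb]] PbQ] ZPb.
set mv := cross (val Pa) (val Pb).
have cn : mv != 0.
  apply: cross_nz; [exact: valP | exact: valP | apply: contra PbPa => /eqP E].
  by apply/eqP/val_inj.
have ab : la != lb.
  apply: contra PbPa => /eqP E; subst lb; apply/eqP.
  exact: (R_le1 Ha HQ bPb aPa PbQ PaQ ZPb ZPa).
have [_ [c _ Hc]] := normalizeP cn.
exists (npt mv) => l P Hl lP PQ ZP.
rewrite on_lineE val_npt // (dot_sc _ Hc); apply/eqP; apply/eqP.
rewrite mulf_eq0; apply/orP; right; apply/eqP.
have [E|la'] := eqVneq l la.
  rewrite E in lP; by rewrite (R_le1 Ha HQ lP aPa PQ PaQ ZP ZPa) dotC dot_cross1.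
have [E|lb'] := eqVneq l lb.
  rewrite E in lP; by rewrite (R_le1 Hb HQ lP bPb PQ PbQ ZP ZPb) dotC dot_cross2.
apply: (keyA q3 HC HQ Ha Hb Hl ab) => //; by rewrite eq_sym.
Qed.
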